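(* Let $\mathcal{H}$ be the map from labeled sequents to hypersequents defined below. For every instance of a rule $(r)$ of $\mathsf{L(S5)}$ with premises $S_1,\dots,S_n$ and conclusion $S$, the figure with premises $\mathcal{H}(S_1),\dots,\mathcal{H}(S_n)$ and conclusion $\mathcal{H}(S)$ is an instance of the corresponding rule of the hypersequent calculus $\mathsf{H(S5)}$, and every rule instance of $\mathsf{H(S5)}$ arises in this way. Consequently, applying $\mathcal{H}$ node-wise yields an isomorphism (shape- and rule-preserving correspondence) between derivations in $\mathsf{L(S5)}$ and derivations in $\mathsf{H(S5)}$ (treating hypersequents as multisets of components, i.e. with implicit external exchange).
   Context: Formulas are those of $\mathcal{L}_M$: $A ::= p \mid \neg A\mid A\rightarrow A\mid \Box A$. A labeled sequent is $\Gamma\Rightarrow\Delta$ with $\Gamma,\Delta$ finite multisets of labeled formulas $w:A$ ($w$ from a denumerable set of labels). For a multiset $\Gamma$ of labeled formulas, $\Gamma\restriction w$ is the multiset $\{A \mid w:A\in\Gamma\}$. The calculus $\mathsf{L(S5)}$ has rules: $(id)$ $\Gamma, w:p\Rightarrow w:p,\Delta$; $(\neg_l)$ from $\Gamma\Rightarrow w:A,\Delta$ infer $\Gamma,w:\neg A\Rightarrow\Delta$; $(\neg_r)$ from $\Gamma,w:A\Rightarrow\Delta$ infer $\Gamma\Rightarrow w:\neg A,\Delta$; $(\rightarrow_l)$ from $\Gamma\Rightarrow w:A,\Delta$ and $\Gamma,w:B\Rightarrow\Delta$ infer $\Gamma,w:A\rightarrow B\Rightarrow\Delta$; $(\rightarrow_r)$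 from $\Gamma,w:A\Rightarrow w:B,\Delta$ infer $\Gamma\Rightarrow w:A\rightarrow B,\Delta$; $(\Box_r)$ from $\Gamma\Rightarrow\Delta,y:A$ infer $\Gamma\Rightarrow\Delta,x:\Box A$ where $y$ is fresh (does not occur in the conclusion); $(\Box_l)$ from $\Gamma,x:\Box A,y:A\Rightarrow\Delta$ infer $\Gamma,x:\Box A\Rightarrow\Delta$ where $y$ occurs in $\Gamma\cup\Delta$ or $y=x$. A hypersequent is a multiset $\Gamma_1\Rightarrow\Delta_1\mid\cdots\mid\Gamma_n\Rightarrow\Delta_n$ of ordinary sequents (components, with $\Gamma_i,\Delta_i$ multisets of formulas); $H$ denotes an arbitrary (possibly empty) side hypersequent. For a labeled sequent $\Gamma\Rightarrow\Delta$ whose labels are exactly $w_1,\dots,w_n$, $\mathcal{H}(\Gamma\Rightarrow\Delta) := (\Gamma\restriction w_1\Rightarrow\Delta\restriction w_1)\mid\cdots\mid(\Gamma\restriction w_n\Rightarrow\Delta\restriction w_n)$. The calculus $\mathsf{H(S5)}$ consists of: $(id)$ $\Gamma,p\Rightarrow p,\Delta\mid H$; the propositional rules $(\neg_l),(\neg_r),(\rightarrow_l),(\rightarrow_r)$ applied to a single component with a side hypersequent $H$; $(\Box_{l1})$ from $\Gamma,\Box A,A\Rightarrow\Delta\mid H$ infer $\Gamma,\Box A\Rightarrow\Delta\mid H$; $(\Box_{l2})$ from $\Gamma_1,\Box A\Rightarrow\Delta_1\mid\Gamma_2,A\Rightarrow\Delta_2\mid H$ infer $\Gamma_1,\Box A\Rightarrow\Delta_1\mid\Gamma_2\Rightarrow\Delta_2\mid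 H$; $(\Box_r)$ from $\Gamma\Rightarrow\Delta\mid\ \Rightarrow A\mid H$ infer $\Gamma\Rightarrow\Delta,\Box A\mid H$. The labeled rule $(\Box_l)$ corresponds to $(\Box_{l1})$ when $y=x$ and to $(\Box_{l2})$ when $y\neq x$.
   Formalization: Each labeled sequent carries a set of labels containing its own; $\mathcal{H}$ gives one, possibly empty, component per label of it; freshness in $(\Box_r)$ and occurrence in $(\Box_l)$ mean non-membership and membership in it, the premise of $(\Box_r)$ adding y. Apart from conventions, each condition added here is assumed in the paper as well or is needed for the statement above to hold. *)

(* Defs.v *)
(* lists with Permutation model finite multisets. *)
From Stdlib Require Import List Permutation PeanoNat.
Import ListNotations.

Inductive fm : Type :=
| Var (p : nat)
| Neg (A : fm)
| Imp (A B : fm)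
| Box (A : fm).

Definition label := nat.
Definition lfm := (label * fm)%type.

Record lseq := LS { lab : list label; lant : list lfm; lsuc : list lfm }.

Definition lwf (S : lseq) : Prop :=
  NoDup (lab S) /\
  (forall wA, In wA (lant S) -> In (fst wA) (lab S)) /\
  (forall wA, In wA (lsuc S) -> In (fst wA) (lab S)).

Definition lseq_eq (S T : lseq) : Prop :=
  Permutation (lab S) (lab T) /\ Permutation (lant S) (lant T) /\
  Permutation (lsuc S) (lsuc T).

(* rule names; the labeled rule (Box_l) is tagged Rboxl1 when y = x and
   Rboxl2 when y <> x, which is the stated correspondence of rules. *)
Inductive rname : Type :=
| Rid | Rnegl | Rnegr | Rimpl | Rimpr | Rboxl1 | Rboxl2 | Rboxr.

Inductive lrule_raw : rname -> list lseq -> lseq -> Prop :=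
| lr_id W G D w p :
    lrule_raw Rid [] (LS W ((w, Var p) :: G) ((w, Var p) :: D))
| lr_negl W G D w A :
    lrule_raw Rnegl [LS W G ((w, A) :: D)] (LS W ((w, Neg A) :: G) D)
| lr_negr W G D w A :
    lrule_raw Rnegr [LS W ((w, A) :: G) D] (LS W G ((w, Neg A) :: D))
| lr_impl W G D w A B :
    lrule_raw Rimpl [LS W G ((w, A) :: D); LS W ((w, B) :: G) D]
                    (LS W ((w, Imp A B) :: G) D)
| lr_impr W G D w A B :
    lrule_raw Rimpr [LS W ((w, A) :: G) ((w, B) :: D)]
                    (LS W G ((w, Imp A B) :: D))
| lr_boxr W G D x y A :
    ~ In y W ->
    lrule_raw Rboxr [LS (y :: W) G ((y, A) :: D)]
                    (LS W G ((x, Box A) :: D))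
| lr_boxl1 W G D x A :
    lrule_raw Rboxl1 [LS W ((x, A) :: (x, Box A) :: G) D]
                     (LS W ((x, Box A) :: G) D)
| lr_boxl2 W G D x y A :
    In y W -> y <> x ->
    lrule_raw Rboxl2 [LS W ((y, A) :: (x, Box A) :: G) D]
                     (LS W ((x, Box A) :: G) D).

Definition lrule (r : rname) (Ss : list lseq) (S : lseq) : Prop :=
  exists Ss' S', Forall2 lseq_eq Ss Ss' /\ lseq_eq S S' /\
    lrule_raw r Ss' S' /\ lwf S /\ Forall lwf Ss.

Definition comp := (list fm * list fm)%type.
Definition hseq := list comp.

Definition comp_eq (c d : comp) : Prop :=
  Permutation (fst c) (fst d) /\ Permutation (snd c) (snd d).

Definition hs_eq (H1 H2 : hseq) : Prop :=
  exists H1', Permutation H1 H1' /\ Forall2 comp_eq H1' H2.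

Inductive hrule_raw : rname -> list hseq -> hseq -> Prop :=
| hr_id G D p H :
    hrule_raw Rid [] ((Var p :: G, Var p :: D) :: H)
| hr_negl G D A H :
    hrule_raw Rnegl [(G, A :: D) :: H] ((Neg A :: G, D) :: H)
| hr_negr G D A H :
    hrule_raw Rnegr [(A :: G, D) :: H] ((G, Neg A :: D) :: H)
| hr_impl G D A B H :
    hrule_raw Rimpl [(G, A :: D) :: H; (B :: G, D) :: H]
                    ((Imp A B :: G, D) :: H)
| hr_impr G D A B H :
    hrule_raw Rimpr [(A :: G, B :: D) :: H] ((G, Imp A B :: D) :: H)
| hr_boxl1 G D A H :
    hrule_raw Rboxl1 [(A :: Box A :: G, D) :: H] ((Box A :: G, D) :: H)
| hr_boxl2 G1 D1 G2 D2 A H :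
    hrule_raw Rboxl2 [(Box A :: G1, D1) :: (A :: G2, D2) :: H]
                     ((Box A :: G1, D1) :: (G2, D2) :: H)
| hr_boxr G D A H :
    hrule_raw Rboxr [(G, D) :: ([], [A]) :: H] ((G, Box A :: D) :: H).

Definition hrule (r : rname) (Hs : list hseq) (G : hseq) : Prop :=
  exists Hs' G', Forall2 hs_eq Hs Hs' /\ hs_eq G G' /\ hrule_raw r Hs' G'.

Definition restrict (G : list lfm) (w : label) : list fm :=
  map snd (filter (fun wA => Nat.eqb (fst wA) w) G).

Definition hyp (S : lseq) : hseq :=
  map (fun w => (restrict (lant S) w, restrict (lsuc S) w)) (lab S).

Inductive tree (A : Type) : Type :=
| Node : rname -> A -> list (tree A) -> tree A.
Arguments Node {A}.

Definition root {A} (t : tree A) : A := match t with Node _ a _ => a end.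

Inductive derivation {A} (R : rname -> list A -> A -> Prop) : tree A -> Prop :=
| der_node r a ts :
    R r (map root ts) a -> Forall (derivation R) ts ->
    derivation R (Node r a ts).

Fixpoint tmap {A B} (f : A -> B) (t : tree A) : tree B :=
  match t with Node r a ts => Node r (f a) (map (tmap f) ts) end.

Inductive tree_rel {A B} (E : A -> B -> Prop) : tree A -> tree B -> Prop :=
| trel r a b ts us :
    E a b -> Forall2 (tree_rel E) ts us -> tree_rel E (Node r a ts) (Node r b us).

(* Main.v *)
Require Import Defs.
From Stdlib Require Import List Permutation PeanoNat Lia.
Import ListNotations.

Lemma perm_filter {A} (f : A -> bool) l l' :
  Permutation l l' -> Permutation (filter f l) (filter f l').
Proof.
  induction 1; simpl.
  - constructor.
  - destruct (f x); auto.
  - destruct (f x), (f y); auto. constructor.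
  - eapply Permutation_trans; eauto.
Qed.

Lemma restrict_cons_eq w A G : restrict ((w,A)::G) w = A :: restrict G w.
Proof. unfold restrict; simpl; rewrite Nat.eqb_refl; reflexivity. Qed.

Lemma restrict_cons_neq w v A G : w <> v -> restrict ((w,A)::G) v = restrict G v.
Proof. intro H; unfold restrict; simpl; apply Nat.eqb_neq in H; rewrite H; reflexivity. Qed.

Lemma restrict_app G1 G2 v : restrict (G1++G2) v = restrict G1 v ++ restrict G2 v.
Proof. unfold restrict; rewrite filter_app, map_app; reflexivity. Qed.

Lemma restrict_nil_lab G v : (forall a, In a G -> fst a <> v) -> restrict G v = [].
Proof.
  induction G as [|[w A] G IH]; intro H; [reflexivity|].
  rewrite restrict_cons_neq. apply IH; intros; apply H; simpl; auto.
  apply (H (w,A)); simpl; auto.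
Qed.

Lemma restrict_perm G G' v : Permutation G G' -> Permutation (restrict G v) (restrict G' v).
Proof. intro H; unfold restrict; apply Permutation_map, perm_filter; exact H. Qed.

Lemma restrict_map_pair w v l : restrict (map (pair w) l) v = if Nat.eqb w v then l else [].
Proof.
  induction l as [|a l IH]; simpl.
  - destruct (Nat.eqb w v); reflexivity.
  - unfold restrict in *; simpl. destruct (Nat.eqb w v) eqn:E; simpl; rewrite IH; reflexivity.
Qed.

Lemma comp_eq_refl c : comp_eq c c.
Proof. split; apply Permutation_refl. Qed.
Lemma comp_eq_sym c d : comp_eq c d -> comp_eq d c.
Proof. intros [H1 H2]; split; apply Permutation_sym; auto. Qed.
Lemma comp_eq_trans c d e : comp_eq c d -> comp_eq d e -> comp_eq c e.
Proof. intros [H1 H2] [H3 H4]; split; eapply Permutation_trans; eauto. Qed.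

Lemma F2_refl h : Forall2 comp_eq h h.
Proof. induction h; constructor; auto using comp_eq_refl. Qed.
Lemma F2_sym h h' : Forall2 comp_eq h h' -> Forall2 comp_eq h' h.
Proof. induction 1; constructor; auto using comp_eq_sym. Qed.
Lemma F2_trans h1 h2 h3 : Forall2 comp_eq h1 h2 -> Forall2 comp_eq h2 h3 -> Forall2 comp_eq h1 h3.
Proof.
  intro H; revert h3; induction H; intros h3 H'; inversion H'; subst; constructor;
  eauto using comp_eq_trans.
Qed.

Lemma hs_eq_refl h : hs_eq h h.
Proof. exists h; split; [apply Permutation_refl|apply F2_refl]. Qed.
Lemma hs_eq_perm h h' : Permutation h h' -> hs_eq h h'.
Proof. intro H; exists h'; split; [exact H|apply F2_refl]. Qed.
Lemma hs_eq_F2 h h' : Forall2 comp_eq h h' -> hs_eq h h'.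
Proof. intro H; exists h; split; [apply Permutation_refl|exact H]. Qed.

Lemma hs_eq_sym h h' : hs_eq h h' -> hs_eq h' h.
Proof.
  intros [h1 [Hp HF]].
  destruct (Permutation_Forall2 (Permutation_sym Hp) HF) as [h2 [Hp2 HF2]].
  exists h2; split; auto. apply F2_sym; auto.
Qed.

Lemma hs_eq_trans h1 h2 h3 : hs_eq h1 h2 -> hs_eq h2 h3 -> hs_eq h1 h3.
Proof.
  intros [a [Hp1 HF1]] [b [Hp2 HF2]].
  apply F2_sym in HF1.
  destruct (Permutation_Forall2 Hp2 HF1) as [c [Hp3 HF3]].
  exists c; split.
  - eapply Permutation_trans; eauto.
  - apply F2_sym in HF3. eapply F2_trans; eauto.
Qed.

Lemma F2hs_trans l1 l2 l3 : Forall2 hs_eq l1 l2 -> Forall2 hs_eq l2 l3 -> Forall2 hs_eq l1 l3.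
Proof.
  intro H; revert l3; induction H; intros l3 H'; inversion H'; subst; constructor;
  eauto using hs_eq_trans.
Qed.
Lemma F2hs_sym l1 l2 : Forall2 hs_eq l1 l2 -> Forall2 hs_eq l2 l1.
Proof. induction 1; constructor; auto using hs_eq_sym. Qed.
Lemma F2hs_refl l : Forall2 hs_eq l l.
Proof. induction l; constructor; auto using hs_eq_refl. Qed.

Lemma lseq_eq_refl S : lseq_eq S S.
Proof. repeat split; apply Permutation_refl. Qed.
Lemma lseq_eq_sym S T : lseq_eq S T -> lseq_eq T S.
Proof. intros (?&?&?); repeat split; apply Permutation_sym; auto. Qed.
Lemma lseq_eq_trans S T U : lseq_eq S T -> lseq_eq T U -> lseq_eq S U.
Proof. intros (?&?&?) (?&?&?); repeat split; eapply Permutation_trans; eauto. Qed.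

Definition fc (G D : list lfm) (v : label) : comp := (restrict G v, restrict D v).

Lemma hyp_eq S : hyp S = map (fc (lant S) (lsuc S)) (lab S).
Proof. reflexivity. Qed.

Lemma hyp_lseq S T : lseq_eq S T -> hs_eq (hyp S) (hyp T).
Proof.
  intros (H1&H2&H3). rewrite !hyp_eq.
  exists (map (fc (lant S) (lsuc S)) (lab T)). split.
  - apply Permutation_map; auto.
  - clear H1. induction (lab T); simpl; constructor; auto.
    split; simpl; apply restrict_perm; auto.
Qed.

Lemma lwf_eq S T : lwf S -> lseq_eq S T -> lwf T.
Proof.
  intros (H1&H2&H3) (E1&E2&E3); repeat split.
  - eapply Permutation_NoDup; eauto.
  - intros a Ha. apply (Permutation_in _ E1). apply H2.
    apply (Permutation_in _ (Permutation_sym E2)); auto.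
  - intros a Ha. apply (Permutation_in _ E1). apply H3.
    apply (Permutation_in _ (Permutation_sym E3)); auto.
Qed.

Fixpoint encA (W : list label) (h : hseq) : list lfm :=
  match W, h with w::W', c::h' => map (pair w) (fst c) ++ encA W' h' | _, _ => [] end.
Fixpoint encS (W : list label) (h : hseq) : list lfm :=
  match W, h with w::W', c::h' => map (pair w) (snd c) ++ encS W' h' | _, _ => [] end.
Definition enc W h := LS W (encA W h) (encS W h).

Lemma encA_lab W h a : In a (encA W h) -> In (fst a) W.
Proof.
  revert h; induction W as [|w W IH]; intros [|c h] H; simpl in *; try contradiction.
  apply in_app_or in H as [H|H].
  - apply in_map_iff in H as [x [<- _]]; left; reflexivity.
  - right; eapply IH; eauto.
Qed.
Lemma encS_lab W h a : In a (encS W h) -> In (fst a) W.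
Proof.
  revert h; induction W as [|w W IH]; intros [|c h] H; simpl in *; try contradiction.
  apply in_app_or in H as [H|H].
  - apply in_map_iff in H as [x [<- _]]; left; reflexivity.
  - right; eapply IH; eauto.
Qed.

Lemma enc_wf W h : NoDup W -> lwf (enc W h).
Proof. intro; repeat split; simpl; auto; intros; [eapply encA_lab|eapply encS_lab]; eauto. Qed.

Lemma restrict_encA_out W h v : ~ In v W -> restrict (encA W h) v = [].
Proof. intro H; apply restrict_nil_lab; intros a Ha E; apply H; rewrite <- E; eapply encA_lab; eauto. Qed.
Lemma restrict_encS_out W h v : ~ In v W -> restrict (encS W h) v = [].
Proof. intro H; apply restrict_nil_lab; intros a Ha E; apply H; rewrite <- E; eapply encS_lab; eauto. Qed.

Lemma hyp_enc W h : NoDup W -> length W = length h -> hyp (enc W h) = h.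
Proof.
  revert h; induction W as [|w W IH]; intros [|[G D] h] Hn Hl; simpl in *; try discriminate; auto.
  inversion Hn; subst. rewrite hyp_eq; simpl.
  f_equal.
  - unfold fc; rewrite !restrict_app, !restrict_map_pair, Nat.eqb_refl,
      restrict_encA_out, restrict_encS_out, !app_nil_r; auto.
  - transitivity (hyp (enc W h)); [|apply IH; auto].
    rewrite hyp_eq; simpl; apply map_ext_in; intros v Hv; unfold fc.
    rewrite !restrict_app, !restrict_map_pair.
    assert (E : w <> v) by (intro; subst; auto). apply Nat.eqb_neq in E; rewrite E; reflexivity.
Qed.

Fixpoint flat (W : list label) (G : list lfm) : list lfm :=
  match W with [] => [] | w::W' => map (pair w) (restrict G w) ++ flat W' G end.

Lemma encA_map W G D : encA W (map (fc G D) W) = flat W G.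
Proof. induction W; simpl; f_equal; auto. Qed.
Lemma encS_map W G D : encS W (map (fc G D) W) = flat W D.
Proof. induction W; simpl; f_equal; auto. Qed.

Lemma perm_split_filter {A} (f : A -> bool) l :
  Permutation l (filter f l ++ filter (fun x => negb (f x)) l).
Proof.
  induction l; simpl; auto. destruct (f a); simpl.
  - constructor; auto.
  - eapply Permutation_trans; [constructor; exact IHl|]. apply Permutation_middle.
Qed.

Lemma map_pair_restrict G w : map (pair w) (restrict G w) = filter (fun a => Nat.eqb (fst a) w) G.
Proof.
  induction G as [|[v A] G IH]; [reflexivity|]. unfold restrict in *; simpl.
  destruct (Nat.eqb v w) eqn:E; simpl; [apply Nat.eqb_eq in E; subst; f_equal|]; exact IH.
Qed.

Lemma restrict_filter_neq G w v : w <> v ->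
  restrict (filter (fun a => negb (Nat.eqb (fst a) w)) G) v = restrict G v.
Proof.
  intro Hne. induction G as [|[u A] G IH]; [reflexivity|]. simpl. destruct (Nat.eqb u w) eqn:E; simpl.
  - apply Nat.eqb_eq in E; subst. rewrite restrict_cons_neq; auto.
  - destruct (Nat.eq_dec u v).
    + subst; rewrite !restrict_cons_eq, IH; auto.
    + rewrite !restrict_cons_neq; auto.
Qed.

Lemma flat_ext W G G' : (forall v, In v W -> restrict G v = restrict G' v) -> flat W G = flat W G'.
Proof. induction W; intro H; simpl; auto. rewrite H by (left; auto). f_equal; apply IHW; intros; apply H; right; auto. Qed.

Lemma flat_perm W G : NoDup W -> (forall a, In a G -> In (fst a) W) -> Permutation G (flat W G).
Proof.
  revert G; induction W as [|w W IH]; intros G Hn HG; simpl.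
  - destruct G as [|a G]; [constructor|]. exfalso; apply (HG a); simpl; auto.
  - inversion Hn; subst.
    eapply Permutation_trans; [apply (perm_split_filter (fun a => Nat.eqb (fst a) w))|].
    rewrite map_pair_restrict. apply Permutation_app_head.
    rewrite (flat_ext W G (filter (fun a => negb (Nat.eqb (fst a) w)) G)).
    + apply IH; auto. intros a Ha. apply filter_In in Ha as [Ha1 Ha2].
      destruct (HG a Ha1) as [E|E]; auto.
      rewrite E, Nat.eqb_refl in Ha2; discriminate.
    + intros v Hv; symmetry; apply restrict_filter_neq; intro; subst; auto.
Qed.

Lemma enc_F2 W h h' : Forall2 comp_eq h h' ->
  Permutation (encA W h) (encA W h') /\ Permutation (encS W h) (encS W h').
Proof.
  intro H; revert W; induction H; intros [|w W]; simpl; auto.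
  destruct H as [E1 E2]; destruct (IHForall2 W); split; apply Permutation_app; auto;
  apply Permutation_map; auto.
Qed.

Lemma canon S0 G' : lwf S0 -> hs_eq (hyp S0) G' ->
  exists W, NoDup W /\ length W = length G' /\ lseq_eq S0 (enc W G').
Proof.
  intros (Hn&HA&HS) [H1 [Hp HF]].
  rewrite hyp_eq in Hp.
  destruct (Permutation_map_inv _ _ (Permutation_sym Hp)) as [W [-> HW]].
  exists W. assert (NoDup W) by (eapply Permutation_NoDup; eauto).
  split; auto. split.
  { rewrite <- (Forall2_length HF), length_map; reflexivity. }
  destruct (enc_F2 W _ _ HF) as [E1 E2].
  repeat split; simpl; auto.
  - eapply Permutation_trans; [|exact E1]. rewrite encA_map. apply flat_perm; auto.
    intros a Ha; apply (Permutation_in _ HW); auto.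
  - eapply Permutation_trans; [|exact E2]. rewrite encS_map. apply flat_perm; auto.
    intros a Ha; apply (Permutation_in _ HW); auto.
Qed.

Lemma fresh (W : list label) : exists y, ~ In y W.
Proof.
  exists (S (fold_right plus 0 W)).
  assert (H : forall x, In x W -> x <= fold_right plus 0 W).
  { induction W as [|a W IH]; simpl; intros x Hx; [contradiction|].
    destruct Hx as [Hx|Hx]; [subst; lia|]. specialize (IH x Hx); lia. }
  intro H'; apply H in H'; lia.
Qed.

Lemma enc_prem W P : NoDup W -> length W = length P ->
  lwf (enc W P) /\ hs_eq (hyp (enc W P)) P.
Proof. intros; split; [apply enc_wf; auto|rewrite hyp_enc; auto; apply hs_eq_refl]. Qed.

Ltac one_prem W P :=
  exists [enc W P], [enc W P];
  split; [constructor; [apply lseq_eq_refl|constructor]|];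
  split; [unfold enc; simpl; constructor|];
  destruct (enc_prem W P) as [Hw1 He1]; auto;
  split; simpl; constructor; auto.

Lemma raw2 r Hs' G' W : NoDup W -> length W = length G' -> hrule_raw r Hs' G' ->
  exists Ss Ss', Forall2 lseq_eq Ss Ss' /\ lrule_raw r Ss' (enc W G') /\
    Forall lwf Ss /\ Forall2 hs_eq (map hyp Ss) Hs'.
Proof.
  intros Hn Hl Hr; destruct Hr;
  (destruct W as [|w W]; [discriminate|]).
  - exists [], []. split. constructor. split. unfold enc; simpl. apply lr_id.
    split; constructor.
  - one_prem (w::W) ((G, A :: D) :: H).
  - one_prem (w::W) ((A :: G, D) :: H).
  - exists [enc (w::W) ((G, A :: D) :: H); enc (w::W) ((B :: G, D) :: H)],
           [enc (w::W) ((G, A :: D) :: H); enc (w::W) ((B :: G, D) :: H)].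
    split; [constructor; [apply lseq_eq_refl|constructor; [apply lseq_eq_refl|constructor]]|].
    split; [unfold enc; simpl; constructor|].
    destruct (enc_prem (w::W) ((G, A :: D) :: H)) as [Hw1 He1]; auto.
    destruct (enc_prem (w::W) ((B :: G, D) :: H)) as [Hw2 He2]; auto.
    split; simpl; constructor; auto; constructor; auto.
  - one_prem (w::W) ((A :: G, B :: D) :: H).
  - one_prem (w::W) ((A :: Box A :: G, D) :: H).
  - destruct W as [|y W]; [discriminate|].
    inversion Hn; subst.
    exists [enc (w::y::W) ((Box A :: G1, D1) :: (A :: G2, D2) :: H)],
      [LS (w::y::W) ((y,A)::(w,Box A)::(map (pair w) G1 ++ map (pair y) G2 ++ encA W H))
          (map (pair w) D1 ++ map (pair y) D2 ++ encS W H)].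
    split.
    { constructor; [|constructor]. unfold enc; simpl. repeat split; try apply Permutation_refl.
      apply Permutation_sym. apply (Permutation_middle ((w,Box A)::map (pair w) G1)). }
    split.
    { unfold enc; simpl. apply lr_boxl2; [right; left; auto|]. intro; subst; apply H2; left; auto. }
    destruct (enc_prem (w::y::W) ((Box A :: G1, D1) :: (A :: G2, D2) :: H)) as [Hw1 He1]; auto.
    split; simpl; constructor; auto.
  - destruct (fresh (w::W)) as [y Hy].
    set (G0 := encA (w::W) ((G,D)::H)). set (D0 := encS (w::W) ((G,D)::H)).
    exists [LS (y::w::W) G0 ((y,A)::D0)], [LS (y::w::W) G0 ((y,A)::D0)].
    split; [constructor; [apply lseq_eq_refl|constructor]|].
    split; [exact (lr_boxr (w::W) G0 D0 w y A Hy)|].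
    split.
    { constructor; [|constructor]. split; [|split]; simpl.
      - constructor; auto.
      - intros a Ha; right; exact (encA_lab _ _ _ Ha).
      - intros a [<-|Ha]; [left; auto|right; exact (encS_lab _ _ _ Ha)]. }
    assert (E : hyp (LS (y::w::W) G0 ((y,A)::D0)) = ([],[A]) :: (G,D) :: H).
    { rewrite hyp_eq. simpl lab. simpl lant. simpl lsuc.
      rewrite map_cons. f_equal.
      - unfold fc; rewrite restrict_cons_eq; unfold G0, D0;
        rewrite restrict_encA_out, restrict_encS_out; auto.
      - transitivity (hyp (enc (w::W) ((G,D)::H))); [|apply hyp_enc; auto].
        rewrite (hyp_eq (enc _ _)). apply map_ext_in. intros v Hv; unfold fc.
        rewrite restrict_cons_neq; auto. intro; subst; auto. }
    simpl; constructor; [|constructor]. rewrite E. apply hs_eq_perm, perm_swap.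
Qed.

Lemma focus (W : list label) w : NoDup W -> In w W -> exists W0, Permutation W (w::W0) /\ ~In w W0 /\ NoDup W0.
Proof.
  intros Hn Hi. destruct (in_split _ _ Hi) as [l1 [l2 ->]]. exists (l1++l2).
  split; [apply Permutation_sym, Permutation_middle|].
  split; [eapply NoDup_remove_2; eauto|eapply NoDup_remove_1; eauto].
Qed.

Lemma focus_hyp W G D w W0 G1 D1 : Permutation W (w::W0) -> ~In w W0 ->
  (forall v, In v W0 -> v <> w -> restrict G v = restrict G1 v /\ restrict D v = restrict D1 v) ->
  hs_eq (hyp (LS W G D)) ((restrict G w, restrict D w) :: map (fc G1 D1) W0).
Proof.
  intros Hp Hw Hf. apply hs_eq_perm. rewrite hyp_eq; simpl.
  eapply Permutation_trans; [apply Permutation_map; exact Hp|]. simpl. apply perm_skip.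
  erewrite map_ext_in; [apply Permutation_refl|]. intros v Hv; unfold fc.
  destruct (Hf v) as [-> ->]; auto. intro; subst; auto.
Qed.

Lemma focus2_hyp W G D x y W1 G1 D1 : Permutation W (x::y::W1) -> ~In x (y::W1) -> ~In y W1 ->
  (forall v, v <> x -> v <> y -> restrict G v = restrict G1 v /\ restrict D v = restrict D1 v) ->
  hs_eq (hyp (LS W G D)) ((restrict G x, restrict D x) :: (restrict G y, restrict D y) :: map (fc G1 D1) W1).
Proof.
  intros Hp Hx Hy Hf. apply hs_eq_perm. rewrite hyp_eq; simpl.
  eapply Permutation_trans; [apply Permutation_map; exact Hp|]. simpl. apply perm_skip, perm_skip.
  erewrite map_ext_in; [apply Permutation_refl|]. intros v Hv; unfold fc.
  destruct (Hf v) as [-> ->]; auto; intro; subst; auto. apply Hx; right; auto.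
Qed.

Lemma hs_eq_cons c h h' : hs_eq h h' -> hs_eq (c::h) (c::h').
Proof. intros [h1 [Hp HF]]. exists (c::h1); split; [apply perm_skip; auto|constructor; auto using comp_eq_refl]. Qed.

Ltac side := intros; repeat split; rewrite ?restrict_cons_neq by congruence; reflexivity.
Ltac rw H := repeat (rewrite restrict_cons_eq in H || rewrite restrict_cons_neq in H by congruence).

Lemma raw1 r Ss' S' : lrule_raw r Ss' S' -> lwf S' ->
  exists Hs' G', Forall2 hs_eq (map hyp Ss') Hs' /\ hs_eq (hyp S') G' /\ hrule_raw r Hs' G'.
Proof.
  intros Hr (Hn&HA&HS); destruct Hr; simpl in *.
  - assert (Hi : In w W) by (apply (HA (w, Var p)); left; auto).
    destruct (focus W w Hn Hi) as (W0&Hp&Hw&_).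
    assert (E1 := focus_hyp W ((w,Var p)::G) ((w,Var p)::D) w W0 G D Hp Hw ltac:(side)).
    rw E1. eexists [], _; split; [constructor|]; split; [exact E1|constructor].
  - assert (Hi : In w W) by (apply (HA (w, Neg A)); left; auto).
    destruct (focus W w Hn Hi) as (W0&Hp&Hw&_).
    assert (E1 := focus_hyp W ((w,Neg A)::G) D w W0 G D Hp Hw ltac:(side)).
    assert (E2 := focus_hyp W G ((w,A)::D) w W0 G D Hp Hw ltac:(side)).
    rw E1. rw E2.
    eexists [_], _; split; [constructor; [exact E2|constructor]|]; split; [exact E1|constructor].
  - assert (Hi : In w W) by (apply (HS (w, Neg A)); left; auto).
    destruct (focus W w Hn Hi) as (W0&Hp&Hw&_).
    assert (E1 := focus_hyp W G ((w,Neg A)::D) w W0 G D Hp Hw ltac:(side)).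
    assert (E2 := focus_hyp W ((w,A)::G) D w W0 G D Hp Hw ltac:(side)).
    rw E1. rw E2.
    eexists [_], _; split; [constructor; [exact E2|constructor]|]; split; [exact E1|constructor].
  - assert (Hi : In w W) by (apply (HA (w, Imp A B)); left; auto).
    destruct (focus W w Hn Hi) as (W0&Hp&Hw&_).
    assert (E1 := focus_hyp W ((w,Imp A B)::G) D w W0 G D Hp Hw ltac:(side)).
    assert (E2 := focus_hyp W G ((w,A)::D) w W0 G D Hp Hw ltac:(side)).
    assert (E3 := focus_hyp W ((w,B)::G) D w W0 G D Hp Hw ltac:(side)).
    rw E1. rw E2. rw E3.
    eexists [_;_], _; split; [constructor; [exact E2|constructor; [exact E3|constructor]]|];
    split; [exact E1|constructor].
  - assert (Hi : In w W) by (apply (HS (w, Imp A B)); left; auto).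
    destruct (focus W w Hn Hi) as (W0&Hp&Hw&_).
    assert (E1 := focus_hyp W G ((w,Imp A B)::D) w W0 G D Hp Hw ltac:(side)).
    assert (E2 := focus_hyp W ((w,A)::G) ((w,B)::D) w W0 G D Hp Hw ltac:(side)).
    rw E1. rw E2.
    eexists [_], _; split; [constructor; [exact E2|constructor]|]; split; [exact E1|constructor].
  -
    assert (Hi : In x W) by (apply (HS (x, Box A)); left; auto).
    destruct (focus W x Hn Hi) as (W0&Hp&Hw&_).
    assert (E1 := focus_hyp W G ((x,Box A)::D) x W0 G D Hp Hw ltac:(side)).
    assert (Hyx : y <> x) by (intro; subst; auto).
    assert (E2 : hs_eq (hyp (LS W G ((y,A)::D))) ((restrict G x, restrict ((y,A)::D) x) :: map (fc G D) W0)).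
    { apply focus_hyp; auto. intros v Hv _; split; auto. apply restrict_cons_neq.
      intro; subst; apply H; apply (Permutation_in _ (Permutation_sym Hp)); right; auto. }
    rw E1. rw E2.
    assert (HG : restrict G y = []).
    { apply restrict_nil_lab; intros a Ha E; apply H; rewrite <- E; auto. }
    assert (HD : restrict D y = []).
    { apply restrict_nil_lab; intros a Ha E; apply H; rewrite <- E; auto. }
    eexists [_], _; split; [constructor; [|constructor]|]; [|split; [exact E1|constructor]].
    rewrite hyp_eq; simpl lab; simpl lant; simpl lsuc. rewrite map_cons.
    unfold fc at 1. rewrite restrict_cons_eq, HG, HD.
    eapply hs_eq_trans; [apply hs_eq_cons; exact E2|]. apply hs_eq_perm, perm_swap.
  - assert (Hi : In x W) by (apply (HA (x, Box A)); left; auto).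
    destruct (focus W x Hn Hi) as (W0&Hp&Hw&_).
    assert (E1 := focus_hyp W ((x,Box A)::G) D x W0 G D Hp Hw ltac:(side)).
    assert (E2 := focus_hyp W ((x,A)::(x,Box A)::G) D x W0 G D Hp Hw ltac:(side)).
    rw E1. rw E2.
    eexists [_], _; split; [constructor; [exact E2|constructor]|]; split; [exact E1|constructor].
  - assert (Hi : In x W) by (apply (HA (x, Box A)); left; auto).
    destruct (focus W x Hn Hi) as (W0&Hp&Hw&Hn0).
    assert (Hy0 : In y W0).
    { apply (Permutation_in _ Hp) in H. destruct H; [congruence|auto]. }
    destruct (focus W0 y Hn0 Hy0) as (W1&Hp1&Hw1&_).
    assert (Hp2 : Permutation W (x::y::W1)) by (eapply Permutation_trans; [exact Hp|apply perm_skip; exact Hp1]).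
    assert (Hx1 : ~ In x (y::W1)) by (intro Hc; apply Hw; apply (Permutation_in _ (Permutation_sym Hp1)); auto).
    assert (E1 := focus2_hyp W ((x,Box A)::G) D x y W1 G D Hp2 Hx1 Hw1 ltac:(side)).
    assert (E2 := focus2_hyp W ((y,A)::(x,Box A)::G) D x y W1 G D Hp2 Hx1 Hw1 ltac:(side)).
    rw E1. rw E2.
    eexists [_], _; split; [constructor; [exact E2|constructor]|]; split; [exact E1|constructor].
Qed.

Lemma part1 r Ss S : lrule r Ss S -> hrule r (map hyp Ss) (hyp S).
Proof.
  intros (Ss'&S'&HF&HE&Hr&Hw&HwS).
  destruct (raw1 _ _ _ Hr (lwf_eq _ _ Hw HE)) as (Hs'&G'&F1&E1&Hr').
  exists Hs', G'. split; [|split; [eapply hs_eq_trans; [apply hyp_lseq; exact HE|exact E1]|exact Hr']].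
  eapply F2hs_trans; [|exact F1].
  clear -HF. induction HF; simpl; constructor; auto. apply hyp_lseq; auto.
Qed.

Lemma key r Hs G S0 : hrule r Hs G -> lwf S0 -> hs_eq (hyp S0) G ->
  exists Ss, lrule r Ss S0 /\ Forall2 hs_eq (map hyp Ss) Hs.
Proof.
  intros (Hs'&G'&HF&HE&Hr) Hw HS.
  destruct (canon S0 G' Hw (hs_eq_trans _ _ _ HS HE)) as (W&Hn&Hl&E).
  destruct (raw2 _ _ _ _ Hn Hl Hr) as (Ss&Ss'&F1&Hr'&HwS&F2).
  exists Ss. split.
  - exists Ss', (enc W G'). split; [exact F1|split; [exact E|split; [exact Hr'|split; auto]]].
  - eapply F2hs_trans; [exact F2|apply F2hs_sym; exact HF].
Qed.

Lemma derivation_ind' {X} (R : rname -> list X -> X -> Prop) (P : tree X -> Prop) :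
  (forall r a ts, R r (map root ts) a -> Forall (derivation R) ts -> Forall P ts -> P (Node r a ts)) ->
  forall t, derivation R t -> P t.
Proof.
  intro f.
  exact (fix IH t (d : derivation R t) {struct d} : P t :=
    match d with
    | der_node _ r a ts HR HF =>
        f r a ts HR HF
          ((fix g l (H : Forall (derivation R) l) : Forall P l :=
              match H with
              | Forall_nil _ => Forall_nil _
              | @Forall_cons _ _ x l Hx Hl => Forall_cons _ (IH x Hx) (g l Hl)
              end) ts HF)
    end).
Qed.

Lemma part4 : forall t', derivation hrule t' -> forall S0, lwf S0 -> hs_eq (hyp S0) (root t') ->
  exists t, root t = S0 /\ derivation lrule t /\ tree_rel hs_eq (tmap hyp t) t'.
Proof.
  apply (derivation_ind' hrule (fun t' => forall S0, lwf S0 -> hs_eq (hyp S0) (root t') ->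
    exists t, root t = S0 /\ derivation lrule t /\ tree_rel hs_eq (tmap hyp t) t')).
  intros r h ts' Hr HF IH S0 Hw HS. simpl in HS.
  destruct (key _ _ _ _ Hr Hw HS) as (Ss&HL&F2).
  assert (HwS : Forall lwf Ss) by (destruct HL as (?&?&?&?&?&?&?); auto).
  assert (Hts : exists ts, map root ts = Ss /\ Forall (derivation lrule) ts /\
            Forall2 (tree_rel hs_eq) (map (tmap hyp) ts) ts').
  { clear -IH F2 HwS. revert Ss F2 HwS. induction IH as [|t' ts' Ht IHs IH']; intros Ss F2 HwS.
    - destruct Ss; simpl in F2; inversion F2. exists []; repeat constructor.
    - destruct Ss as [|S Ss]; simpl in F2; inversion F2; subst. inversion HwS; subst.
      destruct (Ht S) as (t&Hrt&Hd&Hrel); auto.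
      destruct (IH' Ss) as (ts&E&Hds&Hrels); auto.
      exists (t::ts); simpl; rewrite Hrt, E; split; [reflexivity|split; constructor; auto]. }
  destruct Hts as (ts&E&Hds&Hrels).
  exists (Node r S0 ts); simpl; split; auto. split; constructor; auto. rewrite E; auto.
Qed.

Theorem mainTheorem2 :
  (forall r Ss S, lrule r Ss S -> hrule r (map hyp Ss) (hyp S)) /\
  (forall r Hs G, hrule r Hs G ->
     exists Ss S, lrule r Ss S /\ Forall2 hs_eq (map hyp Ss) Hs /\
                  hs_eq (hyp S) G) /\
  (forall t, derivation lrule t -> derivation hrule (tmap hyp t)) /\
  (forall t', derivation hrule t' ->
     exists t, derivation lrule t /\ tree_rel hs_eq (tmap hyp t) t').
Proof.
  split; [exact part1|]. split; [|split].
  - intros r Hs G Hr.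
    assert (Hw : lwf (enc (seq 0 (length G)) G)) by (apply enc_wf, seq_NoDup).
    assert (Hh : hyp (enc (seq 0 (length G)) G) = G) by (apply hyp_enc; [apply seq_NoDup|apply length_seq]).
    destruct (key _ _ _ _ Hr Hw) as (Ss&HL&F2); [rewrite Hh; apply hs_eq_refl|].
    exists Ss, (enc (seq 0 (length G)) G). split; auto. split; auto. rewrite Hh; apply hs_eq_refl.
  - apply derivation_ind'. intros r a ts Hr HF IH; simpl; constructor.
    + replace (map root (map (tmap hyp) ts)) with (map hyp (map root ts)).
      * apply part1; auto.
      * rewrite !map_map; apply map_ext; intros [? ? ?]; reflexivity.
    + apply Forall_map; exact IH.
  - intros t' Hd.
    set (G := root t').
    assert (Hw : lwf (enc (seq 0 (length G)) G)) by (apply enc_wf, seq_NoDup).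
    assert (Hh : hyp (enc (seq 0 (length G)) G) = G) by (apply hyp_enc; [apply seq_NoDup|apply length_seq]).
    destruct (part4 t' Hd _ Hw) as (t&_&Hd'&Hrel); [rewrite Hh; apply hs_eq_refl|].
    exists t; auto.
Qed.
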